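(* Let $(X_n)_{n\ge1}$ be a sequence of integer-valued random variables with $\mathbb E X_n=\mu_n$ and $\operatorname{var}(X_n)=\sigma_n^2$, where $\sigma_n\to\infty$ as $n\to\infty$. Let $(\varepsilon_n)$ be a sequence of positive numbers tending to $0$ such that $$\sup_{x\in\mathbb R}\left|\sigma_n\Pr\big(X_n=\lfloor\mu_n+x\sigma_n\rfloor\big)-\frac{e^{-x^2/2}}{\sqrt{2\pi}}\right|\le\varepsilon_n\quad\text{for all }n.$$ For each $n$ let $X_n'$ be a random variable independent of $X_n$ and having the same distribution as $X_n$. Then $$\Pr(X_n=X_n')=\frac{1}{2\sqrt\pi\,\sigma_n}+O\!\left(\frac{\varepsilon_n}{\sigma_n}+\frac{1}{\sigma_n^2}\right)\quad\text{as }n\to\infty.$$ *)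

(* Defs.v *)
From HB Require Import structures.
From mathcomp Require Import all_boot all_order all_algebra.
From mathcomp Require Import all_classical all_reals all_analysis.
Set Implicit Arguments. Unset Strict Implicit. Unset Printing Implicit Defensive.
Import Order.TTheory GRing.Theory Num.Theory.
Local Open Scope classical_set_scope.
Local Open Scope ring_scope.

Definition indep_RV d (T : measurableType d) (R : realType) (P : probability T R)
  (X Y : T -> R) : Prop :=
  forall A B : set R, measurable A -> measurable B ->
    P (X @^-1` A `&` Y @^-1` B) = (P (X @^-1` A) * P (Y @^-1` B))%E.

Definition same_distrib d (T : measurableType d) (R : realType) (P : probability T R)
  (X Y : T -> R) : Prop :=
  forall A : set R, measurable A -> P (X @^-1` A) = P (Y @^-1` A).

Definition int_valued (T : Type) (R : realType) (X : T -> R) : Prop :=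
  forall t, exists z : int, X t = z%:~R.

(* Main.v *)
Require Import Defs.
From HB Require Import structures.
From mathcomp Require Import all_boot all_order all_algebra.
From mathcomp Require Import all_classical all_reals all_analysis.
From mathcomp Require Import ring lra measurable_realfun.
Import Order.TTheory GRing.Theory Num.Theory.
Set Implicit Arguments. Unset Strict Implicit. Unset Printing Implicit Defensive.
Local Open Scope classical_set_scope.
Local Open Scope ring_scope.

Definition zenum (i : nat) : int :=
  if odd i then - (i./2.+1)%:Z else (i./2)%:Z.

Lemma zenum_inj : injective zenum.
Proof.
move=> i j; rewrite /zenum.
have Hi := odd_double_half i; have Hj := odd_double_half j.
case: (odd i) Hi; case: (odd j) Hj => /= Hj Hi.
- by move/eqP; rewrite eqr_opp => /eqP [] E; rewrite -Hi -Hj E.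
- by move=> E; have : (- (i./2.+1)%:Z < 0)%R by []; rewrite E.
- by move=> E; have : (- (j./2.+1)%:Z < 0)%R by []; rewrite -E.
- by move=> [] E; rewrite -Hi -Hj E.
Qed.

Lemma zenum_surj k : exists i, zenum i = k.
Proof.
case: k => m.
- exists (m.*2); by rewrite /zenum odd_double doubleK.
- exists (m.*2.+1); rewrite /zenum /= odd_double /= uphalf_double NegzE //.
Qed.

Section meas.
Variables (d : measure_display) (T : measurableType d) (R : realType)
  (P : probability T R).

Definition Aset (X : T -> R) (k : int) := X @^-1` [set (k%:~R : R)].

Lemma Aset_meas (X : {RV P >-> R}) k : measurable (Aset X k).
Proof. by apply: measurable_funPTI; exact: measurable_set1. Qed.

Lemma Aset_triv (X : T -> R) : trivIset setT (fun i => Aset X (zenum i)).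
Proof.
move=> i j _ _ [t [/= Ei Ej]]; apply: zenum_inj; apply: (@intr_inj R).
by rewrite -Ei -Ej.
Qed.

Lemma sum_Aset (X : {RV P >-> R}) : int_valued X ->
  (\sum_(0 <= i <oo) P (Aset X (zenum i)) = 1)%E.
Proof.
move=> iX.
have -> : (\sum_(0 <= i <oo) P (Aset X (zenum i)) =
   \sum_(0 <= i <oo | i \in [set: nat]) P (Aset X (zenum i)))%E.
  by apply: eq_eseriesl => i; rewrite in_setT.
rewrite -measure_bigcup //; last exact: Aset_triv.
  rewrite -(probability_setT P); congr (P _).
  apply/seteqP; split => // t _.
  have [k Hk] := iX t; have [i Hi] := zenum_surj k.
  by exists i => //; rewrite /Aset /= Hi Hk.
by move=> i _; exact: Aset_meas.
Qed.

Lemma eq_Aset (X Y : {RV P >-> R}) : int_valued X -> indep_RV P X Y ->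
  same_distrib P X Y ->
  (P [set t | X t = Y t] = \sum_(0 <= i <oo) (P (Aset X (zenum i)) * P (Aset X (zenum i))))%E.
Proof.
move=> iX ind sd.
have -> : [set t | X t = Y t] = \bigcup_(i in [set: nat]) (Aset X (zenum i) `&` Aset Y (zenum i)).
  apply/seteqP; split => t /=.
    move=> E; have [k Hk] := iX t; have [i Hi] := zenum_surj k.
    by exists i => //; rewrite /Aset /= Hi -E Hk.
  by case=> i _ [/= -> ->].
rewrite measure_bigcup //; last first.
  move=> i j _ _ [t [[/= Ei _] [/= Ej _]]]; apply: zenum_inj; apply: (@intr_inj R).
  by rewrite -Ei -Ej.
  by move=> i _; apply: measurableI; exact: Aset_meas.
rewrite (eq_eseriesl _ (Q := xpredT)); last by move=> i; rewrite in_setT.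
apply: eq_eseriesr => i _.
rewrite /Aset; apply: etrans; first exact: (ind _ _ (measurable_set1 _) (measurable_set1 _)).
by congr (_ * _)%E; apply: esym; exact: (sd _ (measurable_set1 _)).
Qed.

End meas.


Section G.
Variable R : realType.
Definition phi (x : R) := expR (- (x ^+ 2) / 2) / Num.sqrt (2 * pi).

Lemma phi_ge0 x : 0 <= phi x.
Proof. by rewrite /phi divr_ge0 ?expR_ge0 ?sqrtr_ge0. Qed.

Lemma phiE : phi = normal_pdf 0 1.
Proof.
apply/funext => x; rewrite /normal_pdf oner_eq0 /= /normal_peak /normal_fun.
rewrite subr0 expr1n mul1r mulrC /phi.
by congr (expR _ / Num.sqrt _); rewrite mulr_natl.
Qed.

Lemma int_phi : (\int[lebesgue_measure]_x (phi x)%:E = 1)%E.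
Proof. by rewrite phiE integral_normal_pdf. Qed.

Lemma phi2E x : phi x ^+ 2 = (2 * pi)^-1 * gauss_fun x.
Proof.
rewrite /phi expr_div_n sqr_sqrtr ?mulr_ge0 ?pi_ge0 // mulrC /gauss_fun.
rewrite expr2 -expRD; congr (_ * expR _).
by field.
Qed.

Lemma int_phi2 : (\int[lebesgue_measure]_x (phi x ^+ 2)%:E = (1 / (2 * Num.sqrt pi))%:E)%E.
Proof.
under eq_integral do rewrite phi2E EFinM.
rewrite ge0_integralZl //=; last 3 first.
- apply: measurableT_comp => //; exact: measurable_gauss_fun.
- by move=> x _; rewrite lee_fin gauss_fun_ge0.
- by rewrite lee_fin invr_ge0 mulr_ge0 ?pi_ge0.
rewrite integralT_gauss -EFinM; congr EFin.
have sp : 0 < Num.sqrt (pi : R) by rewrite sqrtr_gt0 pi_gt0.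
rewrite -{1}(sqr_sqrtr (pi_ge0 R)) expr2.
field; exact: lt0r_neq0.
Qed.
End G.
Arguments phi {R}.

Section piece.
Variable R : realType.
Notation leb := (@lebesgue_measure R).

Lemma measurable_phi : measurable_fun setT (@phi R).
Proof. rewrite phiE; exact: measurable_normal_pdf. Qed.

Lemma mfunE (D : set R) (g : R -> R) : measurable_fun setT g ->
  measurable_fun D (fun x => (g x)%:E).
Proof.
move=> mg; apply/(measurable_EFinP D g).
exact: (measurable_funS measurableT (@subsetT _ D) mg).
Qed.

Lemma mphiE (D : set R) : measurable_fun D (fun x => (phi x)%:E).
Proof.
apply/(measurable_EFinP D (@phi R)).
exact: measurable_funS measurable_phi.
Qed.

Lemma mphi2E (D : set R) : measurable_fun D (fun x => (phi x ^+ 2)%:E).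
Proof.
apply/(measurable_EFinP D (fun x => @phi R x ^+ 2)).
apply: measurable_funS (measurable_funX _ measurable_phi) => //.
Qed.

Ltac mtac := repeat first [exact: measurable_phi | exact: measurable_cst | apply: measurable_funD | apply: measurable_funM | apply: measurable_funX].

Lemma piece (D : set R) (s p e : R) : measurable D -> leb D = (s^-1)%:E ->
  0 < s -> 0 <= p -> 0 <= e -> (forall x, D x -> `|s * p - phi x| <= e) ->
  (\int[leb]_(x in D) (phi x ^+ 2)%:E <= (s * p ^+ 2)%:E + (e * p)%:E
      + e%:E * \int[leb]_(x in D) (phi x)%:E)%E /\
  ((s * p ^+ 2)%:E <= \int[leb]_(x in D) (phi x ^+ 2)%:E + (e * p)%:E
      + e%:E * \int[leb]_(x in D) (phi x)%:E)%E.
Proof.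
move=> mD lD s0 p0 e0 H.
have sn0 : s != 0 by exact: lt0r_neq0.
have sp0 : 0 <= s * p by rewrite mulr_ge0 // ltW.
have cE : forall r, (\int[leb]_(x in D) r%:E = (r / s)%:E)%E.
  move=> r; rewrite (integral_cst leb mD).
  by transitivity (r%:E * (s^-1)%:E)%E; [congr (_ * _)%E | rewrite -EFinM].
have mephi : measurable_fun D (fun x => (e%:E * (phi x)%:E)%E).
  apply/measurable_EFinP; apply: (measurable_funS measurableT (@subsetT _ D)).
  mtac.
have ephi0 : forall x, D x -> (0 <= e%:E * (phi x)%:E)%E.
  by move=> x _; rewrite -EFinM lee_fin mulr_ge0 // phi_ge0.
have intphi : (\int[leb]_(x in D) (e%:E * (phi x)%:E) = e%:E * \int[leb]_(x in D) (phi x)%:E)%E.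
  rewrite ge0_integralZl //.
  - exact: mphiE.
  - by move=> x _; rewrite lee_fin phi_ge0.
have intE : (\int[leb]_(x in D) (((s * p) ^+ 2 + e * (s * p))%:E + e%:E * (phi x)%:E) =
   (s * p ^+ 2)%:E + (e * p)%:E + e%:E * \int[leb]_(x in D) (phi x)%:E)%E.
  rewrite ge0_integralD //.
  - rewrite cE intphi.
    congr (_ + _)%E; rewrite -EFinD; congr EFin; field; exact: sn0.
  - by move=> x _; rewrite lee_fin; nra.
have intE2 : (\int[leb]_(x in D) ((phi x ^+ 2)%:E + ((e * (s * p))%:E + e%:E * (phi x)%:E)) =
   \int[leb]_(x in D) (phi x ^+ 2)%:E + (e * p)%:E + e%:E * \int[leb]_(x in D) (phi x)%:E)%E.
  rewrite ge0_integralD //.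
  - rewrite ge0_integralD //.
    + rewrite cE intphi addeA; congr (_ + _ + _)%E; congr EFin; field; exact: sn0.
    + by move=> x _; rewrite lee_fin mulr_ge0 // mulr_ge0 // ltW.
  - by move=> x _; rewrite lee_fin exprn_ge0 // phi_ge0.
  - exact: mphi2E.
  - by move=> x _; rewrite -EFinM -EFinD lee_fin addr_ge0 // mulr_ge0 // ?phi_ge0 // mulr_ge0 // ltW.
  - apply/measurable_EFinP; apply: (measurable_funS measurableT (@subsetT _ D)).
    mtac.
have HH : forall x, D x -> e * (s * p) + e * phi x >= 0 /\
    phi x ^+ 2 <= (s * p) ^+ 2 + e * (s * p) + e * phi x /\
    (s * p) ^+ 2 <= phi x ^+ 2 + (e * (s * p) + e * phi x).
  move=> x Dx; have := H x Dx; have := @phi_ge0 R x.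
  move: (phi x) sp0 => f c0 f0 /=; rewrite ler_norml => /andP [h1 h2].
  split; first nra. split; nra.
split.
- rewrite -intE; apply: ge0_le_integral => //.
  + by move=> x _; rewrite lee_fin exprn_ge0 // phi_ge0.
  + exact: mphi2E.
  + apply/measurable_EFinP; apply: (measurable_funS measurableT (@subsetT _ D)).
    mtac.
  + by move=> x Dx; rewrite -EFinM -EFinD lee_fin; case: (HH x Dx) => _ [].
- rewrite -intE2.
  have -> : ((s * p ^+ 2)%:E = \int[leb]_(x in D) ((s * p) ^+ 2)%:E)%E.
    rewrite cE; congr EFin; field; exact: sn0.
  apply: ge0_le_integral => //.
  + by move=> x _; rewrite lee_fin exprn_ge0 // mulr_ge0 // ltW.
  + apply/measurable_EFinP; apply: (measurable_funS measurableT (@subsetT _ D)).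
    mtac.
  + by move=> x Dx; rewrite -EFinM -!EFinD lee_fin; case: (HH x Dx) => _ [].
Qed.
End piece.


Section itv.
Variables (R : realType) (m s : R).
Hypothesis s0 : 0 < s.

Definition Iset (k : int) : set R :=
  `[((k%:~R - m) / s), ((k%:~R + 1 - m) / s)[%classic.

Lemma Iset_floor k x : Iset k x <-> Num.floor (m + x * s) = k.
Proof.
rewrite /Iset /= in_itv /= ler_pdivrMr // ltr_pdivlMr //.
split.
  move=> /andP [h1 h2]; apply/eqP; rewrite floor_eq intrD.
  apply/andP; split; lra.
move/eqP; rewrite floor_eq intrD => /andP [h1 h2].
apply/andP; split; lra.
Qed.

Lemma Iset_meas k : measurable (Iset k).
Proof. exact: measurable_itv. Qed.

Lemma Iset_leb k : lebesgue_measure (Iset k) = (s^-1)%:E.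
Proof.
rewrite /Iset lebesgue_measure_itv /= lte_fin ltr_pM2r ?invr_gt0 //.
rewrite ifT; last lra.
rewrite -EFinB; congr EFin; field; exact: lt0r_neq0.
Qed.

Lemma Iset_cover : \bigcup_i Iset (zenum i) = setT.
Proof.
apply/seteqP; split => // x _.
have [i Hi] := zenum_surj (Num.floor (m + x * s)).
by exists i => //; apply/Iset_floor.
Qed.

Lemma Iset_triv : trivIset setT (fun i => Iset (zenum i)).
Proof.
move=> i j _ _ [x [/Iset_floor Ei /Iset_floor Ej]].
by apply: zenum_inj; rewrite -Ei -Ej.
Qed.
End itv.


Lemma nneseriesD3 (R : realType) (f g h : nat -> \bar R) :
  (forall i, 0 <= f i)%E -> (forall i, 0 <= g i)%E -> (forall i, 0 <= h i)%E ->
  (\sum_(0 <= i <oo) (f i + g i + h i) =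
   \sum_(0 <= i <oo) f i + \sum_(0 <= i <oo) g i + \sum_(0 <= i <oo) h i)%E.
Proof.
move=> f0 g0 h0; rewrite nneseriesD //; last by move=> i _ _; rewrite adde_ge0.
by rewrite nneseriesD.
Qed.

Lemma nneseriesZlE (R : realType) (x : R) (f : nat -> R) :
  (forall i, 0 <= f i) ->
  (\sum_(0 <= i <oo) ((x * f i)%:E) = x%:E * \sum_(0 <= i <oo) (f i)%:E)%E.
Proof.
move=> f0; rewrite -nneseriesZl; last by move=> i _; rewrite lee_fin.
by apply: eq_eseriesr => i _; rewrite EFinM.
Qed.

Theorem lemma2 (d : measure_display) (T : measurableType d) (R : realType)
  (P : probability T R) (X X' : nat -> {RV P >-> R})
  (mu sigma eps : nat -> R) :
  (forall n, int_valued (X n)) ->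
  (forall n, P.-integrable setT (EFin \o X n)) ->
  (forall n, ('E_P[X n] = (mu n)%:E)%E) ->
  (forall n, 0 <= sigma n) ->
  (forall n, ('V_P[X n] = (sigma n ^+ 2)%:E)%E) ->
  sigma @ \oo --> +oo ->
  (forall n, 0 < eps n) ->
  eps @ \oo --> 0 ->
  (forall n (x : R),
     `| sigma n * fine (P (X n @^-1` [set ((Num.floor (mu n + x * sigma n))%:~R : R)]))
        - expR (- (x ^+ 2) / 2) / Num.sqrt (2 * pi) | <= eps n) ->
  (forall n, indep_RV P (X n) (X' n)) ->
  (forall n, same_distrib P (X n) (X' n)) ->
  exists C : R, exists N : nat, forall n, (N <= n)%N ->
    `| fine (P [set t | X n t = X' n t]) - 1 / (2 * Num.sqrt pi * sigma n) |
      <= C * (eps n / sigma n + 1 / sigma n ^+ 2).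
Proof.
move=> iX _ _ _ _ sigoo eps0 _ Hloc ind sd.
have [N _ HN] := (proj1 (cvgryPgt sigma) sigoo 0).
exists 2, N => n Nn.
have s0 : 0 < sigma n by exact: HN.
move: (Hloc n) (iX n) (ind n) (sd n) (eps0 n) => {Hloc iX ind sd eps0 HN sigoo}.
set s := sigma n; set e := eps n; set m := mu n; set Y := X n; set Y' := X' n.
move=> Hloc iY ind sd e0.
pose p i := fine (P (Aset Y (zenum i))).
have PE i : P (Aset Y (zenum i)) = (p i)%:E.
  by rewrite fineK //; apply: fin_num_measure; exact: Aset_meas.
have p0 i : 0 <= p i by rewrite fine_ge0 // measure_ge0.
pose a i := (\int[lebesgue_measure]_(x in Iset m s (zenum i)) (phi x)%:E)%E.
pose b i := (\int[lebesgue_measure]_(x in Iset m s (zenum i)) (phi x ^+ 2)%:E)%E.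
have a0 i : (0 <= a i)%E by apply: integral_ge0 => x _; rewrite lee_fin phi_ge0.
have b0 i : (0 <= b i)%E by apply: integral_ge0 => x _; rewrite lee_fin exprn_ge0 // phi_ge0.
have Hp i := piece (Iset_meas m s (zenum i)) (Iset_leb m s0 (zenum i)) s0 (p0 i) (ltW e0)
  (fun x Ix => let Hf := proj1 (Iset_floor m s0 (zenum i) x) Ix in
     ltac:(by have := Hloc x; rewrite Hf)).
have mI i : measurable (Iset m s (zenum i)) := Iset_meas m s (zenum i).
have SA : (\sum_(0 <= i <oo) a i = 1)%E.
  rewrite /a -(@ge0_integral_bigcup _ _ _ lebesgue_measure (fun i => Iset m s (zenum i)) (fun x => (phi x)%:E)) //.
  - by rewrite (Iset_cover m s0) int_phi.
  - exact: mphiE.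
  - by move=> x _; rewrite lee_fin phi_ge0.
  - exact: Iset_triv.
have SB : (\sum_(0 <= i <oo) b i = (1 / (2 * Num.sqrt pi))%:E)%E.
  rewrite /b -(@ge0_integral_bigcup _ _ _ lebesgue_measure (fun i => Iset m s (zenum i)) (fun x => (phi x ^+ 2)%:E)) //.
  - by rewrite (Iset_cover m s0) int_phi2.
  - exact: mphi2E.
  - by move=> x _; rewrite lee_fin exprn_ge0 // phi_ge0.
  - exact: Iset_triv.
have SP : (\sum_(0 <= i <oo) (p i)%:E = 1)%E.
  by rewrite -(sum_Aset iY); apply: eq_eseriesr => i _; rewrite PE.
have SP2 : (\sum_(0 <= i <oo) (p i ^+ 2)%:E = P [set t | Y t = Y' t])%E.
  by rewrite (eq_Aset iY ind sd); apply: eq_eseriesr => i _; rewrite PE -EFinM expr2.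
have sp20 i : 0 <= s * p i ^+ 2 by rewrite mulr_ge0 ?exprn_ge0 // ltW.
have ep0 i : 0 <= e * p i by rewrite mulr_ge0 // ltW.
have ea0 i : (0 <= e%:E * a i)%E by rewrite mule_ge0 // lee_fin ltW.
have U : (\sum_(0 <= i <oo) b i <=
    \sum_(0 <= i <oo) ((s * p i ^+ 2)%:E + (e * p i)%:E + e%:E * a i))%E.
  apply: lee_nneseries => [i _ _|i _]; first exact: b0.
  by case: (Hp i).
rewrite nneseriesD3 // ?nneseriesZlE // ?nneseriesZl // in U; try by move=> i; rewrite exprn_ge0.
rewrite SB SP2 SP SA !mule1 in U.
have L : (\sum_(0 <= i <oo) ((s * p i ^+ 2)%:E) <=
    \sum_(0 <= i <oo) (b i + (e * p i)%:E + e%:E * a i))%E.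
  apply: lee_nneseries => [i _ _|i _]; first by rewrite lee_fin.
  by case: (Hp i).
rewrite nneseriesD3 // ?nneseriesZlE // ?nneseriesZl // in L; try by move=> i; rewrite exprn_ge0.
rewrite SB SP2 SP SA !mule1 in L.
have E0 : (0 <= P [set t | Y t = Y' t])%E by exact: measure_ge0.
move: U L E0; case: (P [set t | Y t = Y' t]) => [r| |] U L E0; last 2 first.
- by rewrite gt0_muley ?lte_fin // in L.
- by [].
rewrite -!EFinM -!EFinD !lee_fin in U L.
have c0 : 0 < Num.sqrt (pi : R) by rewrite sqrtr_gt0 pi_gt0.
have sn0 : s != 0 by exact: lt0r_neq0.
have cn0 : Num.sqrt (pi : R) != 0 by exact: lt0r_neq0.
move: U L; set Q := 1 / (2 * Num.sqrt pi) => U L.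
have t0 : 0 < s^-1 by rewrite invr_gt0.
rewrite (_ : e / s + 1 / s ^+ 2 = e * s^-1 + s^-1 ^+ 2); last by field.
rewrite (_ : r - 1 / (2 * Num.sqrt pi * s) = (s * r - Q) * s^-1); last first. by rewrite /Q; field; apply/andP.
move: (s^-1) t0 => t t0.
rewrite ler_norml; apply/andP; split; nra.
Qed.
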